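(* For all integers $k\geq 3$ and $m\geq 1$ there are mutually disjoint combinatorial lines $L_1,\dots,L_m\subseteq[k]^{2m}$ such that the only quasilines $L\subseteq L_1\cup\dots\cup L_m$ are $L_1,\dots,L_m$ themselves.
   Context: A combinatorial line in $[k]^n$ is a set $\{\eta(i)\colon i\in[k]\}$ where, for some partition $[n]=C\cup M$ with $M\neq\emptyset$ and values $u_c\in[k]$ ($c\in C$), $\eta(i)$ has $c$-th coordinate $u_c$ for $c\in C$ and $m$-th coordinate $i$ for $m\in M$. A quasiline in $[k]^n$ is a $k$-element subset $L$ such that for every coordinate the entries of the points of $L$ in that coordinate are either all identical or mutually distinct. *)

(* Defs.v *)
From mathcomp Require Import all_boot.
Set Implicit Arguments. Unset Strict Implicit. Unset Printing Implicit Defensive.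

(* Points of [k]^n : functions from coordinates 'I_n to values 'I_k
   ([k] = {1..k} is represented by 'I_k = {0..k-1}). *)
Definition point (k n : nat) := {ffun 'I_n -> 'I_k}.

Definition line_point (k n : nat) (M : {set 'I_n}) (u : point k n) (i : 'I_k)
  : point k n := [ffun c => if c \in M then i else u c].

(* Combinatorial line: { eta(i) : i in [k] } for some nonempty M
   (the complement C is the set of fixed coordinates, values u_c). *)
Definition comb_line (k n : nat) (L : {set point k n}) : Prop :=
  exists (M : {set 'I_n}) (u : point k n),
    M != set0 /\ L = [set line_point M u i | i : 'I_k].

Definition quasiline (k n : nat) (L : {set point k n}) : Prop :=
  #|L| = k /\
  forall c : 'I_n,
    (forall x y, x \in L -> y \in L -> x c = y c) \/
    (forall x y, x \in L -> y \in L -> x != y -> x c != y c).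

(* Main.v *)
Require Import Defs.
From mathcomp Require Import all_boot.
From mathcomp Require Import zify.
Set Implicit Arguments. Unset Strict Implicit.

Definition ca (m : nat) (j : 'I_m) : 'I_(2 * m).
Proof. refine (@Ordinal _ (2 * j) _). abstract (have := ltn_ord j; lia). Defined.
Definition cb (m : nat) (j : 'I_m) : 'I_(2 * m).
Proof. refine (@Ordinal _ (2 * j + 1) _). abstract (have := ltn_ord j; lia). Defined.

Definition Mset (m : nat) (i : 'I_m) : {set 'I_(2 * m)} := [set c : 'I_(2 * m) | c %/ 2 == i].
Definition uu (k m : nat) (z0 z1 : 'I_k) : point k (2 * m) :=
  [ffun c : 'I_(2 * m) => if c %% 2 == 1 then z1 else z0].
Definition Lp (k m : nat) (z0 z1 : 'I_k) (i : 'I_m) (t : 'I_k) : point k (2 * m) :=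
  line_point (Mset i) (@uu k m z0 z1) t.
Definition Ls (k m : nat) (z0 z1 : 'I_k) (i : 'I_m) : {set point k (2 * m)} :=
  [set Lp z0 z1 i t | t : 'I_k].

Lemma Lp_ca (k m : nat) (z0 z1 : 'I_k) (i j : 'I_m) (t : 'I_k) :
  Lp z0 z1 i t (ca j) = if j == i then t else z0.
Proof.
rewrite /Lp /line_point ffunE /Mset inE /uu ffunE /=.
have -> : (2 * j) %/ 2 = j by lia.
have -> : (2 * j) %% 2 == 1 = false by apply/eqP; lia.
done.
Qed.

Lemma Lp_cb (k m : nat) (z0 z1 : 'I_k) (i j : 'I_m) (t : 'I_k) :
  Lp z0 z1 i t (cb j) = if j == i then t else z1.
Proof.
rewrite /Lp /line_point ffunE /Mset inE /uu ffunE /=.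
have -> : (2 * j + 1) %/ 2 = j by lia.
have -> : (2 * j + 1) %% 2 == 1 = true by apply/eqP; lia.
by [].
Qed.

Lemma Lp_inj (k m : nat) (z0 z1 : 'I_k) (i : 'I_m) : injective (@Lp k m z0 z1 i).
Proof.
move=> t s e; have := congr1 (fun f : point k (2 * m) => f (ca i)) e.
by rewrite /= !Lp_ca eqxx.
Qed.

Lemma in_Ls (k m : nat) (z0 z1 : 'I_k) (i : 'I_m) x :
  x \in Ls z0 z1 i -> exists t : 'I_k, x = Lp z0 z1 i t.
Proof. by case/imsetP => t _ ->; exists t. Qed.

Lemma eq_pair k m (z0 z1 : 'I_k) (n01 : z0 != z1) (i j : 'I_m) t :
  (Lp z0 z1 i t (ca j) == Lp z0 z1 i t (cb j)) = (j == i).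
Proof.
rewrite Lp_ca Lp_cb; case: (j == i); first by rewrite eqxx.
exact/negbTE.
Qed.

Theorem lemma4p2 (k m : nat) (hk : 3 <= k) (hm : 1 <= m) :
  exists Ls : 'I_m -> {set point k (2 * m)},
    (forall i, comb_line (Ls i)) /\
    (forall i j, i != j -> [disjoint Ls i & Ls j]) /\
    (forall L : {set point k (2 * m)},
        quasiline L -> L \subset \bigcup_(i < m) Ls i ->
        exists i, L = Ls i).
Proof.
have k0 : 0 < k by lia.
have k1 : 1 < k by lia.
pose z0 : 'I_k := Ordinal k0.
pose z1 : 'I_k := Ordinal k1.
have n01 : z0 != z1 by [].
exists (Ls z0 z1).
split.
  move=> i; exists (Mset i), (uu m z0 z1); split => //.
  apply/set0Pn; exists (ca i); rewrite /Mset inE /=; apply/eqP; lia.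
split.
  move=> i j nij; rewrite disjoint_subset; apply/subsetP => x /in_Ls [t ->].
  rewrite inE; apply/negP => /in_Ls [s /(congr1 (fun f : point k (2 * m) => f (ca j) == f (cb j)))].
  by rewrite /= !eq_pair // eqxx eq_sym (negbTE nij).
move=> L [cardL qL] sub.
have inU : forall x, x \in L -> exists j t, x = Lp z0 z1 j t.
  move=> x /(subsetP sub) /bigcupP [j _ /in_Ls [t ->]]; by exists j, t.
have key : forall x y z (j jx jy jz : 'I_m) tx ty tz,
    x = Lp z0 z1 jx tx -> y = Lp z0 z1 jy ty -> z = Lp z0 z1 jz tz ->
    x \in L -> y \in L -> z \in L -> x != y ->
    j != jx -> j != jy -> j = jz -> False.
  move=> x y z j jx jy jz tx ty tz -> -> -> xL yL zL nxy njx njy ejz.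
  subst jz.
  case: (qL (ca j)) => [C|D].
  - have h1 := C _ _ xL zL.
    rewrite !Lp_ca (negbTE njx) eqxx in h1.
    case: (qL (cb j)) => [C'|D'].
    + have h2 := C' _ _ xL zL.
      rewrite !Lp_cb (negbTE njx) eqxx -h1 in h2.
      by move: n01; rewrite h2 eqxx.
    + have := D' _ _ xL yL nxy.
      by rewrite !Lp_cb (negbTE njx) (negbTE njy) eqxx.
  - have := D _ _ xL yL nxy.
    by rewrite !Lp_ca (negbTE njx) (negbTE njy) eqxx.
have : 0 < #|L| by rewrite cardL; lia.
case/card_gt0P => p pL.
have [i [tp ep]] := inU p pL.
exists i.
have subL : L \subset Ls z0 z1 i.
  apply/subsetP => q qIn.
  have [j [tq eqq]] := inU q qIn.
  case: (eqVneq j i) => [ji | nji].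
    by rewrite eqq ji; apply/imsetP; exists tq.
  exfalso.
  have npq : p != q.
    apply/negP => /eqP epq; move: nji; rewrite -epq ep in eqq.
    move: eqq => /(congr1 (fun f : point k (2 * m) => f (ca i) == f (cb i))).
    by rewrite !eq_pair // eqxx => /esym/eqP ->; rewrite eqxx.
  have : 0 < #|(L :\ p) :\ q|.
    have := cardsD1 p L; have := cardsD1 q (L :\ p); rewrite pL cardL.
    by lia.
  case/card_gt0P => r; rewrite !inE => /and3P [nrq nrp rL].
  have [l [tr er]] := inU r rL.
  case: (eqVneq l i) => [li | nli].
  - apply: (key p r q j i l j tp tr tq ep er eqq pL rL qIn) => //;
      first [done | by rewrite eq_sym | by rewrite li eq_sym | by rewrite li].
  - apply: (key q r p i j l i tq tr tp eqq er ep qIn rL pL) => //;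
      first [done | by rewrite eq_sym | by rewrite li eq_sym | by rewrite li].
apply/setP/subset_cardP => //.
rewrite cardL /Ls card_imset; first by rewrite card_ord.
exact: Lp_inj.
Qed.
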